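(* Let $p$ be a prime, $e\ge2$ and $r\ge2$ integers, and let $R$ be a ring of characteristic $p^{r+1}$. Then there is an $R$-ring automorphism $\alpha$ of the polynomial ring $R[x]$ (fixing $R$ elementwise) with $\alpha(x)=x+px^e$, and $\alpha$ has order exactly $p^r$. Consequently $x^{p^r}$ and $y^{p^r}$ are central elements of the Ore extension $R[x][y;\alpha]$ (in which $yf=\alpha(f)y$ for $f\in R[x]$).
   Context: $R[x]$ is the ordinary polynomial ring with $x$ central. $R[x][y;\alpha]$ is the free left $R[x]$-module on $\{y^n:n\in\mathbb N\}$ with multiplication determined by $yf=\alpha(f)y$. *)

(* Defs.v *)
From HB Require Import structures.
From mathcomp Require Import all_boot all_order all_algebra.
Set Implicit Arguments. Unset Strict Implicit. Unset Printing Implicit Defensive.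
Import GRing.Theory.
Local Open Scope ring_scope.

Definition has_char (R : nzRingType) (n : nat) : Prop :=
  (0 < n)%N /\ (n%:R = 0 :> R) /\ (forall m : nat, (0 < m < n)%N -> m%:R <> 0 :> R).

(* The Ore extension R[x][y; alpha]: its elements are represented as
   polynomials in y with (left) coefficients in R[x], i.e. u = \sum_i u_i y^i,
   and multiplication is determined by y f = alpha(f) y:
   (\sum_i u_i y^i)(\sum_j v_j y^j) = \sum_{i,j} u_i alpha^i(v_j) y^(i+j). *)
Definition ore_mul (R : nzRingType) (alpha : {poly R} -> {poly R})
    (u v : {poly {poly R}}) : {poly {poly R}} :=
  \sum_(i < size u) \sum_(j < size v)
     ((u`_i * iter i alpha v`_j) *: 'X^(i + j)).

Definition ore_central (R : nzRingType) (alpha : {poly R} -> {poly R})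
    (z : {poly {poly R}}) : Prop :=
  forall u : {poly {poly R}}, ore_mul alpha u z = ore_mul alpha z u.

(* Main.v *)
Require Import Defs.
From HB Require Import structures.
From mathcomp Require Import all_boot all_order all_algebra.
From mathcomp Require Import zify.
From Stdlib Require Import Lia.
Set Implicit Arguments. Unset Strict Implicit. Unset Printing Implicit Defensive.
Import GRing.Theory.
Lemma binom_div (p r k : nat) : prime p -> (0 < k <= p ^ r)%N ->
  (p ^ r.+1 %| 'C(p ^ r, k) * p ^ k)%N.
Proof.
move=> pp /andP[k0 kN].
have p1 : 1 < p by apply: prime_gt1.
have C0 : 0 < 'C(p ^ r, k) by rewrite bin_gt0.
have hd : p ^ r %| k * 'C(p ^ r, k).
  case: k k0 kN C0 => // m _ _ _.
  by rewrite -mul_bin_diag dvdn_mulr.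
rewrite pfactor_dvdn // in hd; last by rewrite muln_gt0 k0.
rewrite lognM // in hd.
have hv : logn p k < k.
  apply: (@leq_trans (p ^ logn p k)); first exact: ltn_expl.
  apply: dvdn_leq => //; exact: pfactor_dvdnn.
rewrite pfactor_dvdn //; last by rewrite muln_gt0 C0 expn_gt0 prime_gt0.
rewrite lognM // ?expn_gt0 ?prime_gt0 // pfactorK //.
lia.
Qed.
Local Open Scope ring_scope.

Section IB.
Variables (V : zmodType) (a d : V -> V) (c : nat).
Hypothesis dD : forall x y, d (x + y) = d x + d y.
Hypothesis aE : forall g, a g = g + d g *+ c.

Lemma d0 : d 0 = 0.
Proof. have h := dD 0 0; rewrite addr0 -[LHS]addr0 in h; by move/addrI: h. Qed.

Lemma dMn x m : d (x *+ m) = d x *+ m.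
Proof. elim: m => [|m IH]; first by rewrite !mulr0n d0. by rewrite !mulrS dD IH. Qed.

Lemma dsum m (F : 'I_m -> V) : d (\sum_(i < m) F i) = \sum_(i < m) d (F i).
Proof.
elim: m F => [|m IH] F; first by rewrite !big_ord0 d0.
by rewrite !big_ord_recr /= dD IH.
Qed.

Lemma iter_binom n f :
  iter n a f = \sum_(k < n.+1) iter k d f *+ ('C(n, k) * c ^ k).
Proof.
elim: n => [|n IH]; first by rewrite big_ord_recl big_ord0 /= addr0 mulr1n.
rewrite iterS IH aE dsum.
rewrite (big_ord_recl n.+1) /= bin0 expn0 muln1.
under [X in _ = _ + X]eq_bigr => i _ do
  rewrite /bump /= binS mulnDl mulrnDr.
rewrite big_split /=.
rewrite (big_ord_recl n) /= bin0 expn0 muln1 -!addrA; congr (_ + _).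
congr (_ + _).
  rewrite [in RHS]big_ord_recr /= bin_small // mul0n mulr0n addr0.
  by apply: eq_bigr => i _; rewrite /bump /= add1n.
rewrite -sumrMnl; apply: eq_bigr => i _.
by rewrite dMn add0n add1n -iterS -mulrnA expnS; congr (_ *+ _); lia.
Qed.
End IB.

Lemma iter_id (V : zmodType) (a d : V -> V) (p r : nat) :
  prime p -> (forall x y, d (x + y) = d x + d y) ->
  (forall g, a g = g + d g *+ p) -> (forall g : V, g *+ p ^ r.+1 = 0) ->
  forall f, iter (p ^ r) a f = f.
Proof.
move=> pp dD aE z f; rewrite (iter_binom dD aE) big_ord_recl /= bin0 mul1n mulr1n.
rewrite big1 ?addr0 // => i _.
have /dvdnP[m ->] : (p ^ r.+1 %| 'C(p ^ r, bump 0 i) * p ^ bump 0 i)%N.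
  apply: binom_div => //; rewrite /bump /= add1n /=.
  by have := ltn_ord i.
by rewrite mulnC mulrnA z mul0rn.
Qed.
Section P.
Variables (R : nzRingType) (p e : nat).

Definition qq : {poly R} := 'X + 'X^e *+ p.

Lemma cfu : commr_rmorph (@polyC R) qq.
Proof.
move=> x; rewrite /GRing.comm /qq /=.
rewrite mulrDl mulrDr mulrnAl mulrnAr.
by rewrite (commr_sym (commr_polyX _)) (commr_sym (commr_polyXn _ _)).
Qed.

Definition alpha := horner_morph cfu.

Fixpoint QQ (i : nat) : {poly R} :=
  if i is j.+1 then 'X^j * 'X^e + QQ j * 'X + (QQ j * 'X^e) *+ p else 0.

Lemma qexp i : qq ^+ i = 'X^i + QQ i *+ p.
Proof.
elim: i => [|i IH]; first by rewrite !expr0 mul0rn addr0.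
rewrite exprSr IH /qq /= mulrDl !mulrDr -exprSr !mulrnAl !mulrnAr -mulrnA.
rewrite !mulrnDl -!addrA; congr (_ + _).
by rewrite -mulrnA.
Qed.

Definition dd (f : {poly R}) := \sum_(i < size f) (f`_i)%:P * QQ i.

Lemma dd_wide (f : {poly R}) n : (size f <= n)%N -> dd f = \sum_(i < n) (f`_i)%:P * QQ i.
Proof.
move=> h; rewrite /dd (big_ord_widen n (fun i => (f`_i)%:P * QQ i)) // big_mkcond.
apply: eq_bigr => i _; case: ltnP => // h2.
by rewrite nth_default // mul0r.
Qed.

Lemma ddD f g : dd (f + g) = dd f + dd g.
Proof.
rewrite (@dd_wide (f + g) (maxn (size f) (size g))) ?size_polyD //.
rewrite (@dd_wide f (maxn (size f) (size g))) ?leq_maxl //.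
rewrite (@dd_wide g (maxn (size f) (size g))) ?leq_maxr //.
by rewrite -big_split; apply: eq_bigr => i _; rewrite coefD polyCD mulrDl.
Qed.

Lemma alphaE f : alpha f = f + dd f *+ p.
Proof.
rewrite /alpha /horner_morph horner_coef size_map_polyC.
under eq_bigr do rewrite coef_map /= qexp mulrDr mulrnAr.
rewrite big_split /= sumrMnl; congr (_ + _).
transitivity (\poly_(i < size f) f`_i); last exact: coefK.
by rewrite poly_def; apply: eq_bigr => i _; rewrite mul_polyC.
Qed.

Definition uu : {poly R} := 1 + 'X^(e.-1) *+ p.

Lemma qqE : (0 < e)%N -> qq = 'X * uu.
Proof.
by move=> e0; rewrite /qq /uu mulrDr mulr1 mulrnAr -exprS prednK.
Qed.

Lemma uu_pow : (1 < e)%N -> forall n, exists b, uu ^+ n = 1 + 'X * b.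
Proof.
move=> e1; elim=> [|n [b IH]]; first by exists 0; rewrite expr0 mulr0 addr0.
have hu : uu = 1 + 'X * ('X^(e.-2) *+ p).
  by rewrite /uu mulrnAr -exprS; congr (_ + _ *+ _); congr ('X^_); lia.
exists (('X^(e.-2) *+ p) + b + b * 'X * ('X^(e.-2) *+ p)).
rewrite exprSr IH hu mulrDl mul1r mulrDr mulr1 !mulrDr !mulrA !addrA.
by congr (_ + _); rewrite -!addrA; congr (_ + _); rewrite addrC.
Qed.

Lemma alpha_rm f g : alpha (f + g) = alpha f + alpha g.
Proof. by rewrite /alpha rmorphD. Qed.
End P.

Lemma iter_fix (T : Type) (f : T -> T) c : f c = c -> forall i, iter i f c = c.
Proof. by move=> h; elim=> //= i ->. Qed.

Lemma iter_mulr (T : nzRingType) (u g : T) k : iter k (fun g => g * u) g = g * u ^+ k.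
Proof. by elim: k => [|k IH] /=; rewrite ?expr0 ?mulr1 // IH exprSr mulrA. Qed.

Lemma alpha1 (R : nzRingType) p e : @alpha R p e 1 = 1.
Proof. by rewrite /alpha rmorph1. Qed.
Lemma alpha0 (R : nzRingType) p e : @alpha R p e 0 = 0.
Proof. by rewrite /alpha rmorph0. Qed.

Section Main.
Variables (R : nzRingType) (p e r : nat).
Hypotheses (pp : prime p) (e2 : (2 <= e)%N) (hN : (p ^ r.+1)%:R = 0 :> R).

Local Notation al := (@alpha R p e).

Lemma zz (g : {poly R}) : g *+ p ^ r.+1 = 0.
Proof. by rewrite -mulr_natr -polyC_natr hN polyC0 mulr0. Qed.

Lemma idN f : iter (p ^ r) al f = f.
Proof. exact: (iter_id pp (@ddD R p e) (@alphaE R p e) zz). Qed.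

Lemma uuN : (@uu R p e) ^+ (p ^ r) = 1.
Proof.
have := @iter_id _ (fun g => g * (@uu R p e)) (fun g => g * 'X^(e.-1)) p r pp.
move/(_ (fun x y => mulrDl x y _)).
have aE : forall g : {poly R}, g * (@uu R p e) = g + g * 'X^(e.-1) *+ p.
  by move=> g; rewrite /uu mulrDr mulr1 mulrnAr.
move/(_ aE zz 1); rewrite iter_mulr mul1r; exact.
Qed.

Lemma alXN : al ('X^(p ^ r)) = 'X^(p ^ r).
Proof.
rewrite /alpha rmorphXn /= horner_morphX qqE; last by lia.
rewrite exprMn_comm; last exact: (commr_sym (commr_polyX _)).
by rewrite uuN mulr1.
Qed.

Lemma invariant k : exists g, iter k al 'X = 'X + 'X^e *+ (k * p) + 'X^(e.+1) * g.
Proof.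
elim: k => [|k [g IH]]; first by exists 0; rewrite mul0n mulr0n mulr0 !addr0.
have [b1 hb1] := @uu_pow R p e e2 e.
have he : (@qq R p e) ^+ e = 'X^e + 'X^(e.+1) * b1.
  rewrite qqE; last by lia.
  rewrite exprMn_comm; last exact: (commr_sym (commr_polyX _)).
  by rewrite hb1 mulrDr mulr1 mulrA -exprSr.
have he1 : (@qq R p e) ^+ e.+1 = 'X^(e.+1) * (@uu R p e) ^+ e.+1.
  rewrite qqE; last by lia.
  by rewrite exprMn_comm //; exact: (commr_sym (commr_polyX _)).
exists (b1 *+ (k * p) + (@uu R p e) ^+ e.+1 * al g).
rewrite iterS IH /alpha !rmorphD /= rmorphMn rmorphM rmorphXn /= !horner_morphX.
rewrite rmorphXn /= horner_morphX he he1 /qq mulrnDl mulrDr mulrnAr mulrA mulSn mulrnDr.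
by rewrite !addrA.

Qed.

End Main.

Theorem mainTheorem19 (R : nzRingType) (p e r : nat) :
  prime p -> (2 <= e)%N -> (2 <= r)%N -> has_char R (p ^ r.+1) ->
  exists alpha : {poly R} -> {poly R},
    [/\ (* alpha is an R-ring automorphism of R[x] fixing R elementwise *)
        (forall f g, alpha (f + g) = alpha f + alpha g),
        (forall f g, alpha (f * g) = alpha f * alpha g),
        alpha 1 = 1,
        bijective alpha &
        (forall c : R, alpha c%:P = c%:P)]
    /\ [/\ alpha 'X = 'X + p%:R *: 'X^e,
        (* alpha has order exactly p^r *)
        (forall f, iter (p ^ r) alpha f = f),
        (forall k : nat, (0 < k < p ^ r)%N -> exists f, iter k alpha f <> f),
        (* x^(p^r) and y^(p^r) are central in R[x][y; alpha] *)
        ore_central alpha (('X^(p ^ r))%:P) &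
        ore_central alpha 'X^(p ^ r)].
Proof.
move=> pp e2 r2 [_ [hN hlt]].
have N0 : (0 < p ^ r)%N by rewrite expn_gt0 prime_gt0.
exists (@alpha R p e); split; first split.
- by move=> f g; rewrite /alpha rmorphD.
- by move=> f g; rewrite /alpha rmorphM.
- by rewrite /alpha rmorph1.
- exists (iter (p ^ r).-1 (@alpha R p e)) => f.
    by rewrite -iterSr prednK // (idN e pp hN).
  by rewrite -iterS prednK // (idN e pp hN).
- by move=> c; rewrite /alpha horner_morphC.
split.
- by rewrite /alpha horner_morphX /qq scaler_nat.
- exact: (idN e pp hN).
- move=> k /andP[k0 kN]; exists 'X => H.
  have [g hg] := invariant R pp e2 k.
  have := congr1 (fun f : {poly R} => f`_e) H; rewrite hg /=.
  rewrite !coefD coefMn coefX coefXn coefXnM eqxx ltnSn.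
  have -> : (e == 1)%N = false by apply/eqP; lia.
  rewrite add0r addr0 => h.
  apply: (hlt (k * p)%N); last by [].
  apply/andP; split; first by rewrite muln_gt0 k0 prime_gt0.
  by rewrite expnSr ltn_mul2r prime_gt0.
- move=> u; rewrite /ore_mul.
  have hX : ('X^(p ^ r) : {poly R}) != 0 by rewrite -size_poly_eq0 size_polyXn.
  rewrite size_polyC hX /= big_ord1.
  under eq_bigr do rewrite big_ord1 /= coefC eqxx iter_fix ?(alXN pp e2 hN) // addn0.
  by apply: eq_bigr => i _; rewrite /= coefC eqxx add0n commr_polyXn.
- move=> u; rewrite /ore_mul size_polyXn.
  under eq_bigr => i _ do rewrite big_ord_recr /= [X in iter _ _ X]coefXn eqxx
     iter_fix ?alpha1 // mulr1.
  rewrite (eq_bigr (fun i : 'I_(size u) => u`_i *: 'X^(i + p ^ r))); last first.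
    move=> i _; rewrite big1 ?add0r // => j _.
    by rewrite coefXn ltn_eqF ?ltn_ord //= iter_fix ?alpha0 // mulr0 scale0r.
  rewrite [RHS]big_ord_recr /= [X in _ = X + _]big1 ?add0r => [|i _]; last first.
    by apply: big1 => j _; rewrite coefXn ltn_eqF ?ltn_ord //= mul0r scale0r.
  apply: eq_bigr => j _; rewrite coefXn eqxx mul1r (idN e pp hN) addnC //.
Qed.
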